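(* Assume that the lsc function $f:\mathbb{R}^n\to(-\infty,\infty]$ is prox-regular and subdifferentially continuous at $\bar x\in\operatorname{dom} f$ for the subgradient $\bar x^*\in\partial f(\bar x)$. Then there is a neighborhood $U\times V$ of $(\bar x,\bar x^* )$ such that for every $(x,x^* )\in \operatorname{gph}\partial f\cap (U\times V)$ the function $f$ is prox-regular and subdifferentially continuous at $x$ for $x^*$ and \begin{gather*}T_{\operatorname{gph} \partial f}^f(x,x^* )= T_{\operatorname{gph} \partial f}(x,x^* ),\ \widehat N_{\operatorname{gph} \partial f}^f(x,x^* )= \widehat N_{\operatorname{gph} \partial f}(x,x^* ),\ N_{\operatorname{gph} \partial f}^f(x,x^* )= N_{\operatorname{gph} \partial f}(x,x^* ),\\ D_f(\partial f)(x,x^* )=D(\partial f)(x,x^* ),\ \widehat D^*_f(\partial f)(x,x^* )=\widehat D^*(\partial f)(x,x^* ),\ D^*_f(\partial f)(x,x^* )=\widehat D^*(\partial f)(x,x^* ),\\ \mathcal{S}_f(\partial f)(x,x^* )=\mathcal{S}(\partial f)(x,x^* ),\ \mathcal{S}^*_f(\partial f)(x,x^* )=\mathcal{S}^*(\partial f)(x,x^* ). \end{gather*}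
   Context: $\partial f$ denotes the limiting subdifferential, $\operatorname{gph}$ the graph. $f$ is prox-regular at $\bar x$ for $\bar x^*$ if $f$ is finite at $\bar x$, $\bar x^*\in\partial f(\bar x)$, and there exist $\epsilon>0$, $r\ge 0$ with $f(x')\ge f(x)+\langle x^*,x'-x\rangle-\frac r2\|x'-x\|^2$ whenever $\|x'-\bar x\|<\epsilon$, $(x,x^* )\in\operatorname{gph}\partial f$, $\|x-\bar x\|<\epsilon$, $\|x^*-\bar x^*\|<\epsilon$, $f(x)<f(\bar x)+\epsilon$. $f$ is subdifferentially continuous at $\bar x$ for $\bar x^*$ if $(x_k,x_k^* )\to(\bar x,\bar x^* )$ with $(x_k,x_k^* )\in\operatorname{gph}\partial f$ implies $f(x_k)\to f(\bar x)$. Write $(x_k,x_k^* )\to_f(\bar x,\bar x^* )$ ($f$-attentive convergence in $\operatorname{gph}\partial f$) if $(x_k,x_k^* )\in\operatorname{gph}\partial f$, $(x_k,x_k^* )\to(\bar x,\bar x^* )$ and $f(x_k)\to f(\bar x)$. $T_\Omega$, $\widehat N_\Omega=(T_\Omega)^\circ$, $N_\Omega$ are the tangent, regular normal and limiting normal cones; $D$, $\widehat D^*$, $D^*$ the graphical derivative, regular and limiting coderivative ($\operatorname{gph}\widehat D^*F(\bar x,\bar y)=\{(y^*,x^* ): (x^*,-y^* )\in\widehat N_{\operatorname{gph}F}(\bar x,\bar y)\}$, similarly $D^*$ with $N$). The $f$-attentive versions are defined by replacing ordinary convergence in $\operatorname{gph}\partial f$ by $f$-attentive convergence: $T^f_{\operatorname{gph}\partial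 f}(\bar x,\bar x^* )$ is the set of limits $\lim_k ((x_k,x_k^* )-(\bar x,\bar x^* ))/t_k$ with $t_k\downarrow0$, $(x_k,x_k^* )\to_f(\bar x,\bar x^* )$; $\widehat N^f_{\operatorname{gph}\partial f}:=(T^f_{\operatorname{gph}\partial f})^\circ$; $N^f_{\operatorname{gph}\partial f}(\bar x,\bar x^* )$ is the outer limit of $\widehat N^f_{\operatorname{gph}\partial f}(x,x^* )$ as $(x,x^* )\to_f(\bar x,\bar x^* )$; $D_f(\partial f)$, $\widehat D^*_f(\partial f)$, $D^*_f(\partial f)$ are built from these cones as the ordinary ones. With $\mathcal Z_{nn}$ the space of $n$-dimensional subspaces of $\mathbb R^n\times\mathbb R^n$ with metric $d(L_1,L_2)=\|P_{L_1}-P_{L_2}\|$ (orthogonal projections), the SC derivative $\mathcal S(\partial f)(\bar x,\bar x^* )$ is the set of $L\in\mathcal Z_{nn}$ that are limits of $T_{\operatorname{gph}\partial f}(x_k,x_k^* )\in\mathcal Z_{nn}$ along $(x_k,x_k^* )\to(\bar x,\bar x^* )$ in $\operatorname{gph}\partial f$; the $f$-attentive SC derivative $\mathcal S_f(\partial f)(\bar x,\bar x^* )$ is the set of limits of $T^f_{\operatorname{gph}\partial f}(x_k,x_k^* )\in\mathcal Z_{nn}$ along $(x_k,x_k^* )\to_f(\bar x,\bar x^* )$. Adjoint versions: $\mathcal S^*=\{L^*: L\in\mathcal S\}$, $\mathcal S^*_f=\{L^*:L\in\mathcal S_f\}$, where $L^*=\{(v^*,u^* ): (u^*,-v^* )\in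 L^\perp\}$. *)

(* Defs.v *)
From HB Require Import structures.
From mathcomp Require Import all_boot all_order all_algebra.
From mathcomp Require Import all_classical all_reals all_analysis.
Set Implicit Arguments. Unset Strict Implicit. Unset Printing Implicit Defensive.
Import Order.TTheory GRing.Theory Num.Theory.
Import numFieldNormedType.Exports.
Local Open Scope classical_set_scope.
Local Open Scope ring_scope.

Section Defs.
Context {R : realType} {n : nat}.
Local Notation V := 'rV[R]_n.
Local Notation Z := (V * V)%type.

Definition dotv (u v : V) : R := \sum_(i < n) u ord0 i * v ord0 i.
Definition normv (u : V) : R := Num.sqrt (dotv u u).
Definition dotp (z w : Z) : R := dotv z.1 w.1 + dotv z.2 w.2.
Definition normp (z : Z) : R := Num.sqrt (dotp z z).
Definition subp (z w : Z) : Z := (z.1 - w.1, z.2 - w.2).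

Definition regsubdiff (f : V -> \bar R) (x xs : V) : Prop :=
  f x \is a fin_num /\
  forall e : R, 0 < e -> exists2 d : R, 0 < d &
    forall y, normv (y - x) < d ->
      ((fine (f x) + dotv xs (y - x) - e * normv (y - x))%:E <= f y)%E.

Definition subdiff (f : V -> \bar R) (x xs : V) : Prop :=
  f x \is a fin_num /\
  exists (xk xsk : nat -> V),
    (forall k, regsubdiff f (xk k) (xsk k)) /\
    xk @ \oo --> x /\
    (fun k => f (xk k)) @ \oo --> f x /\
    xsk @ \oo --> xs.

Definition gph (f : V -> \bar R) : set Z := [set z | subdiff f z.1 z.2].

Definition gconv (f : V -> \bar R) (zk : nat -> Z) (z : Z) : Prop :=
  (forall k, gph f (zk k)) /\
  (fun k => (zk k).1) @ \oo --> z.1 /\ (fun k => (zk k).2) @ \oo --> z.2.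

Definition fconv (f : V -> \bar R) (zk : nat -> Z) (z : Z) : Prop :=
  gconv f zk z /\ (fun k => f (zk k).1) @ \oo --> f z.1.

(* Cones built from a convergence mode Conv (gconv f or fconv f). *)
Definition tcone (Conv : (nat -> Z) -> Z -> Prop) (z : Z) : set Z :=
  [set w | exists (zk : nat -> Z) (tk : nat -> R),
     Conv zk z /\ (forall k, 0 < tk k) /\ tk @ \oo --> (0 : R) /\
     (fun k => (tk k)^-1 *: ((zk k).1 - z.1)) @ \oo --> w.1 /\
     (fun k => (tk k)^-1 *: ((zk k).2 - z.2)) @ \oo --> w.2].

Definition polar (K : set Z) : set Z := [set v | forall w, K w -> dotp v w <= 0].

Definition rncone (Conv : (nat -> Z) -> Z -> Prop) (z : Z) : set Z :=
  polar (tcone Conv z).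

Definition lncone (Conv : (nat -> Z) -> Z -> Prop) (z : Z) : set Z :=
  [set v | exists (zk vk : nat -> Z),
     Conv zk z /\ (forall k, rncone Conv (zk k) (vk k)) /\
     (fun k => (vk k).1) @ \oo --> v.1 /\ (fun k => (vk k).2) @ \oo --> v.2].

Definition gderiv Conv (z : Z) (u : V) : set V := [set v | tcone Conv z (u, v)].
Definition rcoderiv Conv (z : Z) (ys : V) : set V := [set xs | rncone Conv z (xs, - ys)].
Definition lcoderiv Conv (z : Z) (ys : V) : set V := [set xs | lncone Conv z (xs, - ys)].

Definition isZnn (L : set Z) : Prop :=
  exists b : 'I_n -> Z,
    (forall c : 'I_n -> R,
        \sum_(i < n) c i *: (b i).1 = 0 -> \sum_(i < n) c i *: (b i).2 = 0 ->
        forall i, c i = 0) /\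
    L = [set z | exists c : 'I_n -> R,
                   z = (\sum_(i < n) c i *: (b i).1, \sum_(i < n) c i *: (b i).2)].

Definition orth_proj (L : set Z) (P : Z -> Z) : Prop :=
  forall z, L (P z) /\ forall w, L w -> dotp (subp z (P z)) w = 0.

(* convergence in Z_nn for the metric d(L1,L2) = ||P_L1 - P_L2|| (operator norm) *)
Definition Zconv (Lk : nat -> set Z) (L : set Z) : Prop :=
  exists (Pk : nat -> Z -> Z) (P : Z -> Z),
    (forall k, orth_proj (Lk k) (Pk k)) /\ orth_proj L P /\
    forall e : R, 0 < e -> exists N : nat, forall k, (N <= k)%N ->
      forall z, normp z <= 1 -> normp (subp (Pk k z) (P z)) <= e.

Definition SCderiv Conv (z : Z) : set (set Z) :=
  [set L | isZnn L /\ exists zk : nat -> Z,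
     Conv zk z /\ (forall k, isZnn (tcone Conv (zk k))) /\
     Zconv (fun k => tcone Conv (zk k)) L].

Definition adjoint (L : set Z) : set Z :=
  [set z | forall w, L w -> dotp (z.2, - z.1) w = 0].

Definition SCstar Conv (z : Z) : set (set Z) :=
  [set Ls | exists L, SCderiv Conv z L /\ Ls = adjoint L].

Definition prox_regular (f : V -> \bar R) (xb xbs : V) : Prop :=
  f xb \is a fin_num /\ subdiff f xb xbs /\
  exists (e r : R), 0 < e /\ 0 <= r /\
    forall x' x xs, normv (x' - xb) < e -> subdiff f x xs ->
      normv (x - xb) < e -> normv (xs - xbs) < e -> (f x < f xb + e%:E)%E ->
      ((fine (f x) + dotv xs (x' - x) - r / 2 * normv (x' - x) ^+ 2)%:E <= f x')%E.

Definition subdiff_continuous (f : V -> \bar R) (xb xbs : V) : Prop :=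
  forall zk : nat -> Z, gconv f zk (xb, xbs) -> (fun k => f (zk k).1) @ \oo --> f xb.

End Defs.

(* Main.v *)
Require Import Defs.
From HB Require Import structures.
From mathcomp Require Import all_boot all_order all_algebra.
From mathcomp Require Import all_classical all_reals all_analysis.
From mathcomp Require Import lra.
Import Order.TTheory GRing.Theory Num.Theory.
Import numFieldNormedType.Exports.
Set Implicit Arguments. Unset Strict Implicit. Unset Printing Implicit Defensive.
Local Open Scope classical_set_scope.
Local Open Scope ring_scope.
Section Basic.
Context {R : realType} {n : nat}.
Local Notation V := 'rV[R]_n.

Lemma dotv_ge0 (u : V) : 0 <= dotv u u.
Proof. by rewrite /dotv; apply: sumr_ge0 => i _; rewrite -expr2 sqr_ge0. Qed.

Lemma normv_ge0 (u : V) : 0 <= normv u.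
Proof. exact: sqrtr_ge0. Qed.

Lemma normv_sqr (u : V) : normv u ^+ 2 = dotv u u.
Proof. by rewrite /normv sqr_sqrtr // dotv_ge0. Qed.

Lemma normv0 : normv (0 : V) = 0.
Proof. by rewrite /normv /dotv big1 ?sqrtr0 // => i _; rewrite mxE mul0r. Qed.

Lemma dotv0r (u : V) : dotv u 0 = 0.
Proof. by rewrite /dotv big1 // => i _; rewrite mxE mulr0. Qed.

Lemma entry_le_normv (u : V) i : `|u ord0 i| <= normv u.
Proof.
rewrite -sqrtr_sqr /normv ler_sqrt ?dotv_ge0 // /dotv (bigD1 i) //= -expr2.
by rewrite lerDl; apply: sumr_ge0 => j _; rewrite -expr2 sqr_ge0.
Qed.

Lemma normv_wtri (a b : V) t : normv a < t -> normv b < t -> normv (a + b) < 2 * t.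
Proof.
move=> ha hb.
have h : dotv (a + b) (a + b) <= 2 * dotv a a + 2 * dotv b b.
  rewrite /dotv !mulr_sumr -big_split /=; apply: ler_sum => i _; rewrite !mxE.
  set x := a ord0 i; set y := b ord0 i. have := sqr_ge0 (x - y). nra.
have := normv_ge0 a; have := normv_ge0 b; have := normv_ge0 (a + b).
move: h; rewrite -!normv_sqr => h. nra.
Qed.

Lemma normv_tri (a b c : V) t : normv (a - b) < t / 2 -> normv (b - c) < t / 2 ->
  normv (a - c) < t.
Proof.
move=> h1 h2; have := normv_wtri h1 h2.
have -> : a - b + (b - c) = a - c by rewrite addrA subrK.
by rewrite mulrC divfK // pnatr_eq0.
Qed.

Lemma entry_cvg {T} (F : set_system T) {FF : Filter F} (a : T -> V) (a0 : V) (i : 'I_n) :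
  a @ F --> a0 -> (fun t => a t ord0 i) @ F --> a0 ord0 i.
Proof.
move=> /cvgrPdist_lt H; apply/cvgrPdist_lt => eps eps0.
apply: filterS (H eps eps0) => t; apply: le_lt_trans.
have -> : a0 ord0 i - a t ord0 i = (a0 - a t) ord0 i by rewrite !mxE.
rewrite (_ : `|a0 - a t| = mx_norm (a0 - a t)) // mx_normrE; apply/bigmax_geP; right => /=.
by exists (ord0, i).
Qed.

Lemma cvg_dotv {T} (F : set_system T) {FF : Filter F} (a b : T -> V) (a0 b0 : V) :
  a @ F --> a0 -> b @ F --> b0 ->
  (fun t => dotv (a t) (b t)) @ F --> dotv a0 b0.
Proof.
move=> ha hb; rewrite /dotv; apply: cvg_big => //.
  exact: add_continuous.
by move=> i _; apply: cvgM; apply: entry_cvg.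
Qed.

Lemma cvg_normv {T} (F : set_system T) {FF : Filter F} (a : T -> V) (a0 : V) :
  a @ F --> a0 -> (fun t => normv (a t)) @ F --> normv a0.
Proof.
move=> ha; have h2 := cvg_dotv ha ha.
apply: (@cvg_comp _ _ _ (fun t => dotv (a t) (a t)) (@Num.sqrt R) F); [exact: h2| exact: sqrt_continuous].
Qed.

Lemma normv_cvg {T} (F : set_system T) {FF : Filter F} (a : T -> V) (a0 : V) :
  (fun t => normv (a t - a0)) @ F --> 0 -> a @ F --> a0.
Proof.
move=> /cvgrPdist_lt H; apply/cvgrPdist_lt => eps eps0.
apply: filterS (H eps eps0) => t; rewrite sub0r normrN ger0_norm ?normv_ge0 // => h.
rewrite (_ : `|a0 - a t| = mx_norm (a0 - a t)) // mx_normrE; apply: bigmax_lt => // -[i j] _ /=.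
rewrite (ord1 i) !mxE distrC; apply: le_lt_trans h.
by have := entry_le_normv (a t - a0) j; rewrite !mxE.
Qed.

End Basic.

Section Generic.
Context {R : realType} {n : nat}.
Local Notation V := 'rV[R]_n.
Local Notation Z := (V * V)%type.
Variables (C1 C2 : (nat -> Z) -> Z -> Prop) (G : set Z).
Hypothesis Hiff : forall z zk, G z -> (C1 zk z <-> C2 zk z).
Hypothesis Hev1 : forall z zk, G z -> C1 zk z -> exists N, forall k, (N <= k)%N -> G (zk k).
Hypothesis Hsh2 : forall z zk N, C2 zk z -> C2 (fun k => zk (k + N)%N) z.

Lemma tcone_eqG z : G z -> tcone C1 z = tcone C2 z.
Proof.
move=> Gz; apply/seteqP; split => w [zk [tk [H rest]]]; exists zk, tk; split => //.
  by apply/Hiff.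
by apply/Hiff.
Qed.

Lemma lncone_subG z : G z -> lncone C1 z `<=` lncone C2 z.
Proof.
move=> Gz v [zk [vk [Hc [Hr [c1 c2]]]]].
have [N HN] := Hev1 Gz Hc.
exists (fun k => zk (k + N)%N), (fun k => vk (k + N)%N); split.
  by apply: Hsh2; apply/Hiff.
split.
  move=> k; rewrite /rncone -tcone_eqG; first exact: Hr.
  by apply: HN; rewrite leq_addl.
by split; [move: c1 | move: c2]; rewrite -(cvg_shiftn N).
Qed.

Lemma SC_subG z : G z -> SCderiv C1 z `<=` SCderiv C2 z.
Proof.
move=> Gz L [HL [zk [Hc [Hz [Pk [P [HPk [HP HC]]]]]]]].
have [N HN] := Hev1 Gz Hc.
split => //; exists (fun k => zk (k + N)%N); split.
  by apply: Hsh2; apply/Hiff.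
have GN k : G (zk (k + N)%N) by apply: HN; rewrite leq_addl.
split.
  by move=> k; rewrite -tcone_eqG //; exact: Hz.
exists (fun k => Pk (k + N)%N), P; split.
  by move=> k /=; rewrite -tcone_eqG //; exact: HPk.
split => // eps eps0; have [N0 HN0] := HC eps eps0; exists N0 => k kN0.
by apply: HN0; apply: leq_trans kN0 _; rewrite leq_addr.
Qed.

End Generic.

Section Region.
Context {R : realType} {n : nat}.
Local Notation V := 'rV[R]_n.
Local Notation Z := (V * V)%type.
Variables (f : V -> \bar R) (xb xbs : V) (e : R).
Hypothesis Hsc : subdiff_continuous f xb xbs.
Hypothesis Hfin : f xb \is a fin_num.
Hypothesis e0 : 0 < e.

Lemma region : exists2 d : R, 0 < d & forall x xs, subdiff f x xs ->
  normv (x - xb) < d -> normv (xs - xbs) < d -> (f x < f xb + e%:E)%E.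
Proof.
apply: contrapT => H.
have H' : forall k : nat, exists z : Z, subdiff f z.1 z.2 /\
    normv (z.1 - xb) < k.+1%:R^-1 /\ normv (z.2 - xbs) < k.+1%:R^-1 /\
    ~ (f z.1 < f xb + e%:E)%E.
  move=> k; apply: contrapT => Hk; apply: H; exists k.+1%:R^-1 => // x xs hs h1 h2.
  by apply: contrapT => hf; apply: Hk; exists (x, xs).
have [g Hg] := choice H'.
have hconv : gconv f g (xb, xbs).
  split; first by move=> k; have [] := Hg k.
  split; apply: normv_cvg; apply/cvgrPdist_lt => eps eps0;
    near=> k; rewrite sub0r normrN ger0_norm ?normv_ge0 //;
    have [_ [h1 [h2 _]]] := Hg k.
    apply: lt_trans h1 _; near: k; exact: (near_infty_natSinv_lt (PosNum eps0)).
  apply: lt_trans h2 _; near: k; exact: (near_infty_natSinv_lt (PosNum eps0)).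
have := Hsc hconv.
set a := fine (f xb); have fa : f xb = a%:E by rewrite /a fineK.
rewrite fa => /fine_cvg hc.
have : a < a + e by rewrite ltrDl.
move=> /(cvgr_lt _ hc) [N _ HN].
have := HN N (leqnn N) => /=.
have [[hfin _] [_ [_ hnot]]] := Hg N.
apply/negP; rewrite -leNgt; move: hnot; rewrite -(fineK hfin) fa -EFinD lte_fin.
by rewrite leNgt => /negP.
Unshelve. all: by end_near.
Qed.

End Region.

Section Main.
Context {R : realType} {n : nat}.
Local Notation V := 'rV[R]_n.
Local Notation Z := (V * V)%type.
Variables (f : V -> \bar R) (xb xbs : V) (e r d : R).
Hypothesis Hpr : forall x' x xs, normv (x' - xb) < e -> subdiff f x xs ->
      normv (x - xb) < e -> normv (xs - xbs) < e -> (f x < f xb + e%:E)%E ->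
      ((fine (f x) + dotv xs (x' - x) - r / 2 * normv (x' - x) ^+ 2)%:E <= f x')%E.
Hypothesis r0 : 0 <= r.
Hypothesis d0 : 0 < d.
Hypothesis dle : d <= e.
Hypothesis Hreg : forall x xs, subdiff f x xs ->
  normv (x - xb) < d -> normv (xs - xbs) < d -> (f x < f xb + e%:E)%E.

Definition good (z : Z) := gph f z /\ normv (z.1 - xb) < d / 2 /\ normv (z.2 - xbs) < d / 2.

Lemma half_lt : d / 2 < d.
Proof. have := d0; lra. Qed.

Lemma normB_cvg0 (a : nat -> V) (a0 : V) : a @ \oo --> a0 ->
  (fun k => normv (a k - a0)) @ \oo --> 0.
Proof.
move=> c; have := cvg_normv (cvgB c (cvg_cst a0)); rewrite /= subrr normv0; exact.
Qed.

Lemma normB_cvg0' (a : nat -> V) (a0 : V) : a @ \oo --> a0 ->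
  (fun k => normv (a0 - a k)) @ \oo --> 0.
Proof.
move=> c; have := cvg_normv (cvgB (cvg_cst a0) c); rewrite /= subrr normv0; exact.
Qed.

Lemma good_sc x xs : good (x, xs) -> subdiff_continuous f x xs.
Proof.
move=> [hs [h1 h2]] zk [Hg [c1 c2]] /=; rewrite /= in hs h1 h2 c1 c2.
have fx : f x \is a fin_num by case: hs.
set a := fine (f x); have fa : f x = a%:E by rewrite /a fineK.
have h1' : normv (x - xb) < d := lt_trans h1 half_lt.
have h2' : normv (xs - xbs) < d := lt_trans h2 half_lt.
have hfx : (f x < f xb + e%:E)%E := Hreg hs h1' h2'.
rewrite fa; apply: cvg_EFin.
  by apply: nearW => k; case: (Hg k).
have n1 := normB_cvg0 c1.
have n2 := normB_cvg0 c2.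
have n1' := normB_cvg0' c1.
have d20 : 0 < d / 2 by have := d0; lra.
have Hn : \forall k \near \oo,
   a + dotv xs ((zk k).1 - x) - r / 2 * normv ((zk k).1 - x) ^+ 2
   <= fine (f (zk k).1) <=
   a - dotv (zk k).2 (x - (zk k).1) + r / 2 * normv (x - (zk k).1) ^+ 2.
  near=> k.
  have hk1 : normv ((zk k).1 - x) < d / 2 by near: k; exact: cvgr_lt _ n1 _ d20.
  have hk2 : normv ((zk k).2 - xs) < d / 2 by near: k; exact: cvgr_lt _ n2 _ d20.
  have hsk : subdiff f (zk k).1 (zk k).2 := Hg k.
  have hb1 := normv_tri hk1 h1.
  have hb2 := normv_tri hk2 h2.
  have hfk := Hreg hsk hb1 hb2.
  have U := Hpr (lt_le_trans h1' dle) hsk (lt_le_trans hb1 dle) (lt_le_trans hb2 dle) hfk.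
  have L := Hpr (lt_le_trans hb1 dle) hs (lt_le_trans h1' dle) (lt_le_trans h2' dle) hfx.
  have [fkfin _] := hsk.
  set b := fine (f (zk k).1) in U L *.
  have fb : f (zk k).1 = b%:E by rewrite /b fineK.
  move: U L; rewrite fa fb !lee_fin /= => U L.
  apply/andP; split; lra.
apply: (squeeze_cvgr Hn).
  have l1 : (fun k => dotv xs ((zk k).1 - x)) @ \oo --> 0.
    by have := cvg_dotv (cvg_cst xs) (cvgB c1 (cvg_cst x)); rewrite /= subrr dotv0r; exact.
  have l2 : (fun k => normv ((zk k).1 - x) ^+ 2) @ \oo --> 0.
    by have := cvgM n1 n1; rewrite mul0r; exact.
  have := cvgB (cvgD (cvg_cst a) l1) (cvgM (cvg_cst (r / 2)) l2).
  by rewrite addr0 mulr0 subr0; exact.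
have l1 : (fun k => dotv (zk k).2 (x - (zk k).1)) @ \oo --> 0.
  by have := cvg_dotv c2 (cvgB (cvg_cst x) c1); rewrite /= subrr dotv0r; exact.
have l2 : (fun k => normv (x - (zk k).1) ^+ 2) @ \oo --> 0.
  by have := cvgM n1' n1'; rewrite mul0r; exact.
have := cvgD (cvgB (cvg_cst a) l1) (cvgM (cvg_cst (r / 2)) l2).
by rewrite subr0 mulr0 addr0; exact.
Unshelve. all: by end_near.
Qed.

Lemma good_prox x xs : good (x, xs) -> prox_regular f x xs.
Proof.
move=> [hs [h1 h2]]; rewrite /= in hs h1 h2.
split; first by case: hs.
split => //; exists (d / 2), r; split; first by have := d0; lra.
split => // x' x2 xs2 hx' hs2 hx2 hxs2 _.
have a1 := normv_tri hx' h1.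
have a2 := normv_tri hx2 h1.
have a3 := normv_tri hxs2 h2.
exact: (Hpr (lt_le_trans a1 dle) hs2 (lt_le_trans a2 dle) (lt_le_trans a3 dle) (Hreg hs2 a2 a3)).
Qed.

Lemma good_ev z zk : good z -> gconv f zk z -> exists N, forall k, (N <= k)%N -> good (zk k).
Proof.
case: z => x xs [hs [h1 h2]] [Hg [c1 c2]]; rewrite /= in hs h1 h2 c1 c2.
have m1 : (fun k => normv ((zk k).1 - xb)) @ \oo --> normv (x - xb).
  exact: (cvg_normv (cvgB c1 (cvg_cst xb))).
have m2 : (fun k => normv ((zk k).2 - xbs)) @ \oo --> normv (xs - xbs).
  exact: (cvg_normv (cvgB c2 (cvg_cst xbs))).
have : \forall k \near \oo, good (zk k).
  near=> k; split; first exact: Hg.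
  split; near: k; [exact: cvgr_lt _ m1 _ h1 | exact: cvgr_lt _ m2 _ h2].
by case=> N _ HN; exists N => k kN; exact: HN.
Unshelve. all: by end_near.
Qed.

Lemma iff_fg z zk : good z -> (fconv f zk z <-> gconv f zk z).
Proof.
case: z => x xs Gz; split; first by case.
move=> hg; split => //; exact: good_sc Gz _ hg.
Qed.

Lemma iff_gf z zk : good z -> (gconv f zk z <-> fconv f zk z).
Proof. by move=> Gz; apply: iff_sym; exact: iff_fg. Qed.

Lemma ev_g z zk : good z -> gconv f zk z -> exists N, forall k, (N <= k)%N -> good (zk k).
Proof. exact: good_ev. Qed.

Lemma ev_f z zk : good z -> fconv f zk z -> exists N, forall k, (N <= k)%N -> good (zk k).
Proof. by move=> Gz [hg _]; exact: good_ev Gz hg. Qed.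

End Main.

Lemma sh_g {R : realType} {n : nat} (f : 'rV[R]_n -> \bar R) z zk N :
  gconv f zk z -> gconv f (fun k => zk (k + N)%N) z.
Proof.
move=> [Hg [c1 c2]]; split; first by move=> k; exact: Hg.
by split; [move: c1 | move: c2]; rewrite -(cvg_shiftn N).
Qed.

Lemma sh_f {R : realType} {n : nat} (f : 'rV[R]_n -> \bar R) z zk N :
  fconv f zk z -> fconv f (fun k => zk (k + N)%N) z.
Proof.
move=> [hg c]; split; first exact: sh_g.
by move: c; rewrite -(cvg_shiftn N).
Qed.

Unset Implicit Arguments.

Theorem lemma3p7 (R : realType) (n : nat) (f : 'rV[R]_n -> \bar R)
    (xb xbs : 'rV[R]_n) :
  (forall x, f x != -oo%E) ->
  lower_semicontinuous f ->
  f xb \is a fin_num ->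
  subdiff f xb xbs ->
  prox_regular f xb xbs ->
  subdiff_continuous f xb xbs ->
  exists (U W : set 'rV[R]_n), nbhs xb U /\ nbhs xbs W /\
    forall x xs, U x -> W xs -> subdiff f x xs ->
      prox_regular f x xs /\ subdiff_continuous f x xs /\
          tcone (fconv f) (x, xs) = tcone (gconv f) (x, xs) /\
          rncone (fconv f) (x, xs) = rncone (gconv f) (x, xs) /\
          lncone (fconv f) (x, xs) = lncone (gconv f) (x, xs) /\
          gderiv (fconv f) (x, xs) = gderiv (gconv f) (x, xs) /\
          rcoderiv (fconv f) (x, xs) = rcoderiv (gconv f) (x, xs) /\
          lcoderiv (fconv f) (x, xs) = lcoderiv (gconv f) (x, xs) /\
          SCderiv (fconv f) (x, xs) = SCderiv (gconv f) (x, xs) /\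
          SCstar (fconv f) (x, xs) = SCstar (gconv f) (x, xs).
Proof.
move=> _ _ Hfin _ [_ [_ [e [r [e0 [r0 Hpr]]]]]] Hsc.
have [d0 d00 Hreg0] := region Hsc Hfin e0.
pose d := Num.min d0 e.
have d_gt0 : 0 < d by rewrite lt_min d00 e0.
have dle : d <= e by rewrite ge_min lexx orbT.
have Hreg : forall x xs, subdiff f x xs ->
    normv (x - xb) < d -> normv (xs - xbs) < d -> (f x < f xb + e%:E)%E.
  move=> x xs hs h1 h2; apply: (Hreg0 _ _ hs).
    by apply: lt_le_trans h1 _; rewrite ge_min lexx.
  by apply: lt_le_trans h2 _; rewrite ge_min lexx.
have d20 : 0 < d / 2 by lra.
exists [set x | normv (x - xb) < d / 2], [set xs | normv (xs - xbs) < d / 2].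
split.
  have hU : (fun x => normv (x - xb)) @ xb --> 0.
    have := cvg_normv (cvgB (@cvg_id _ (nbhs xb)) (cvg_cst xb)).
    by rewrite subrr normv0; exact.
  exact: (cvgr_lt _ hU _ d20).
split.
  have hW : (fun x => normv (x - xbs)) @ xbs --> 0.
    have := cvg_normv (cvgB (@cvg_id _ (nbhs xbs)) (cvg_cst xbs)).
    by rewrite subrr normv0; exact.
  exact: (cvgr_lt _ hW _ d20).
move=> x xs Ux Wxs hs.
have Gz : good f xb xbs d (x, xs) by [].
have HiffFG := iff_fg Hpr d_gt0 dle Hreg.
have HiffGF := iff_gf Hpr d_gt0 dle Hreg.
have HevF := ev_f (f := f) (xb := xb) (xbs := xbs) (d := d).
have HevG := ev_g (f := f) (xb := xb) (xbs := xbs) (d := d).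
have HshF := @sh_f R n f.
have HshG := @sh_g R n f.
have T1 := tcone_eqG HiffFG Gz.
have L1 : lncone (fconv f) (x, xs) = lncone (gconv f) (x, xs).
  apply/seteqP; split.
    exact: (lncone_subG HiffFG HevF HshG Gz).
  exact: (lncone_subG HiffGF HevG HshF Gz).
have S1 : SCderiv (fconv f) (x, xs) = SCderiv (gconv f) (x, xs).
  apply/seteqP; split.
    exact: (SC_subG HiffFG HevF HshG Gz).
  exact: (SC_subG HiffGF HevG HshF Gz).
split; first exact: (good_prox Hpr r0 d_gt0 dle Hreg Gz).
split; first exact: (good_sc Hpr d_gt0 dle Hreg Gz).
split; first exact: T1.
split; first by rewrite /rncone T1.
split; first exact: L1.
split; first by rewrite /gderiv T1.
split; first by rewrite /rcoderiv /rncone T1.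
split; first by rewrite /lcoderiv L1.
split; first exact: S1.
by rewrite /SCstar S1.
Qed.
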